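(* Consider $N=Ln$ units in $L$ strata of equal size $n$, stratum $l$ containing $n_{l(1)}$ treated and $n_{l(0)}$ control units, with $n_1=\sum_l n_{l(1)}>0$, $n_0=\sum_l n_{l(0)}>0$ and $\sum_l n_{l(0)}n_{l(1)}>0$. Let $\sigma_0^2>0$ and $\boldsymbol\Sigma=\boldsymbol I_L\otimes\boldsymbol J_n+\sigma_0^2\boldsymbol I_N$ (units ordered by stratum, $\boldsymbol J_n$ the $n\times n$ all-ones matrix). Let $(\hat\mu,\hat\tau)'=\big[X'\boldsymbol\Sigma^{-1}X\big]^{-1}X'\boldsymbol\Sigma^{-1}\boldsymbol Y$ with $X=(\boldsymbol 1_N,\boldsymbol A)$. Then $\hat\tau=\lambda\hat\tau_1+(1-\lambda)\hat\tau_0$, where $$\hat\tau_0=\bar Y_1-\bar Y_0,\qquad \hat\tau_1=\frac{\sum_l n_{l(0)}n_{l(1)}(\bar Y_{l(1)}-\bar Y_{l(0)})}{\sum_l n_{l(0)}n_{l(1)}},\qquad \lambda=\frac{N\sum_l n_{l(0)}n_{l(1)}}{n_1n_0\sigma_0^2+N\sum_l n_{l(0)}n_{l(1)}},$$ $\bar Y_1,\bar Y_0$ being the overall treated and control sample means and $\bar Y_{l(a)}$ the mean outcome of group $a$ within stratum $l$. In particular $\lambda\to1$ (so $\hat\tau\to\hat\tau_1$) as $\sigma_0^2\to0$, and $\lambda$ is decreasing in $\sigma_0^2$.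
   Context: $\boldsymbol Y$ is the vector of observed outcomes and $\boldsymbol A$ the vector of binary treatment indicators. This is the generalized least squares estimate of $\tau$ in the nonparametric GP model $\boldsymbol Y\sim MVN(\mu\boldsymbol 1+\tau\boldsymbol A,\boldsymbol\Sigma)$ whose GP covariance encodes the known stratum structure ($k_{ij}=1$ within a stratum, $0$ otherwise). *)

(* Defs.v *)
From HB Require Import structures.
From mathcomp Require Import all_boot all_order all_algebra.
Set Implicit Arguments. Unset Strict Implicit. Unset Printing Implicit Defensive.
Import Order.TTheory GRing.Theory Num.Theory.
Local Open Scope ring_scope.

(* Units are indexed by i : 'I_(L*n), ordered by stratum: unit i lies in
   stratum (i %/ n).  A i = true iff unit i is treated. *)

Definition Sigma (R : realFieldType) (L n : nat) (s2 : R) : 'M[R]_(L * n) :=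
  \matrix_(i, j) (((i %/ n)%N == (j %/ n)%N)%:R + s2 * (i == j)%:R).

Definition design (R : realFieldType) (N : nat) (A : 'I_N -> bool) : 'M[R]_(N, 2) :=
  \matrix_(i, j) (if j == 0 :> 'I_2 then 1 else (A i)%:R).

Definition gls (R : realFieldType) (N : nat) (S : 'M[R]_N) (X : 'M[R]_(N, 2))
  (Y : 'cV[R]_N) : 'cV[R]_2 :=
  invmx (X^T *m invmx S *m X) *m (X^T *m invmx S *m Y).

Definition tau_hat (R : realFieldType) (L n : nat) (s2 : R)
  (A : 'I_(L * n) -> bool) (Y : 'cV[R]_(L * n)) : R :=
  gls (Sigma L n s2) (design R A) Y (@Ordinal 2 1 isT) 0.

Definition nla (L n : nat) (A : 'I_(L * n) -> bool) (l : nat) (a : bool) : nat :=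
  #|[set i : 'I_(L * n) | ((i %/ n)%N == l) && (A i == a)]|.

Definition na (N : nat) (A : 'I_N -> bool) (a : bool) : nat :=
  #|[set i : 'I_N | A i == a]|.

Definition Ybar_la (R : realFieldType) (L n : nat) (A : 'I_(L * n) -> bool)
  (Y : 'cV[R]_(L * n)) (l : nat) (a : bool) : R :=
  (\sum_(i : 'I_(L * n) | ((i %/ n)%N == l) && (A i == a)) Y i 0) / (nla A l a)%:R.

Definition Ybar_a (R : realFieldType) (N : nat) (A : 'I_N -> bool)
  (Y : 'cV[R]_N) (a : bool) : R :=
  (\sum_(i : 'I_N | A i == a) Y i 0) / (na A a)%:R.

Definition Sprod (L n : nat) (A : 'I_(L * n) -> bool) : nat :=
  \sum_(l < L) nla A l false * nla A l true.

Definition tau0_hat (R : realFieldType) (N : nat) (A : 'I_N -> bool)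
  (Y : 'cV[R]_N) : R := Ybar_a A Y true - Ybar_a A Y false.

Definition tau1_hat (R : realFieldType) (L n : nat) (A : 'I_(L * n) -> bool)
  (Y : 'cV[R]_(L * n)) : R :=
  (\sum_(l < L) ((nla A l false * nla A l true)%:R *
      (Ybar_la A Y l true - Ybar_la A Y l false))) / (Sprod A)%:R.

Definition lambda (R : realFieldType) (L n : nat) (A : 'I_(L * n) -> bool) (s2 : R) : R :=
  ((L * n)%:R * (Sprod A)%:R) /
  ((na A true)%:R * (na A false)%:R * s2 + (L * n)%:R * (Sprod A)%:R).

(* Main.v *)
Require Import Defs.
From HB Require Import structures.
From mathcomp Require Import all_boot all_order all_algebra.
From mathcomp Require Import ring lra.
Set Implicit Arguments. Unset Strict Implicit. Unset Printing Implicit Defensive.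
Import Order.TTheory GRing.Theory Num.Theory.
Local Open Scope ring_scope.

Lemma blk_nat (R : ringType) (F : nat -> R) (n L l : nat) : (0 < n)%N ->
  \sum_(0 <= i < L * n | (i %/ n)%N == l) F i =
  if (l < L)%N then \sum_(0 <= r < n) F (l * n + r)%N else 0.
Proof.
move=> n0; elim: L => [|L IH]; first by rewrite mul0n big_geq.
rewrite mulSnr (@big_cat_nat _ _ _ (L * n)) //= ?leq_addr // IH.
rewrite -{1}(add0n (L * n)%N) big_addn addKn big_nat_cond.
rewrite (eq_bigl (fun i => (0 <= i < n)%N && (L == l))); last first.
  move=> i /=; case: (ltnP i n) => hi; rewrite ?andbF ?andbT //=.
  by rewrite addnC divnMDl // divn_small // addn0.
rewrite ltnS; case: (ltngtP l L) => hlL /=.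
- by rewrite [X in _ + X]big_pred0 ?addr0 ?add0r // => i; rewrite andbF.
- by rewrite [X in _ + X]big_pred0 ?addr0 ?add0r // => i; rewrite andbF.
- rewrite add0r [RHS]big_nat_cond; apply: eq_big => i /=; first by rewrite andbT.
  by rewrite hlL addnC.
Qed.

Lemma blk_lt (L n : nat) (i : 'I_(L * n)) : (i %/ n < L)%N.
Proof.
case: n i => [|n] i; first by case: i; rewrite muln0.
by rewrite ltn_divLR.
Qed.

Definition bs (R : ringType) (L n : nat) (u : 'I_(L * n) -> R) (l : nat) : R :=
  \sum_(i : 'I_(L * n) | (i %/ n)%N == l) u i.

Lemma bs1 (R : ringType) (L n l : nat) : (l < L)%N ->
  bs (fun _ : 'I_(L * n) => 1 : R) l = n%:R.
Proof.
move=> hl; rewrite /bs; case: n => [|n]; first by rewrite big_pred0 // => -[]; rewrite muln0.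
rewrite -(big_mkord (fun i => (i %/ n.+1)%N == l) (fun _ => 1)) blk_nat // hl.
by rewrite sumr_const_nat subn0.
Qed.

Lemma bs_part (R : ringType) (L n : nat) (G : 'I_(L * n) -> R) :
  \sum_i G i = \sum_(l < L) bs G l.
Proof.
rewrite (partition_big (fun i => Ordinal (blk_lt i)) xpredT) //=.
Qed.

Lemma sum_delta (R : ringType) (N : nat) (h : 'I_N -> R) (i : 'I_N) :
  \sum_j (i == j)%:R * h j = h i.
Proof.
rewrite (bigD1 i) //= eqxx mul1r big1 ?addr0 // => j; rewrite eq_sym => /negbTE ->.
by rewrite mul0r.
Qed.

Lemma sum_blk (R : ringType) (L n : nat) (h : 'I_(L * n) -> R) (i : 'I_(L * n)) :
  \sum_(j : 'I_(L * n)) ((i %/ n)%N == (j %/ n)%N)%:R * h j = bs h (i %/ n)%N.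
Proof.
rewrite /bs [RHS]big_mkcond; apply: eq_bigr => j _; rewrite eq_sym.
by case: eqP => _; rewrite ?mul1r ?mul0r.
Qed.

Definition Sinv (R : realFieldType) (L n : nat) (s2 : R) : 'M[R]_(L * n) :=
  \matrix_(i, j) (s2^-1 * ((i == j)%:R - (n%:R + s2)^-1 * ((i %/ n)%N == (j %/ n)%N)%:R)).

Lemma SigmaSinv (R : realFieldType) (L n : nat) (s2 : R) : 0 < s2 ->
  Sigma L n s2 *m Sinv L n s2 = 1%:M.
Proof.
move=> hs; have s0 : s2 != 0 by rewrite gt_eqF.
have c0 : n%:R + s2 != 0 by rewrite gt_eqF // ltr_wpDl.
apply/matrixP => i k; rewrite /Sigma /Sinv !mxE.
set c := (n%:R + s2)^-1.
rewrite (eq_bigr (fun j : 'I_(L * n) => s2^-1 * ((k == j)%:R * ((i %/ n)%N == (j %/ n)%N)%:R)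
   - s2^-1 * c * (((i %/ n)%N == (j %/ n)%N)%:R * ((j %/ n)%N == (k %/ n)%N)%:R)
   + ((i == j)%:R * (j == k)%:R) - c * ((i == j)%:R * ((j %/ n)%N == (k %/ n)%N)%:R))); last first.
  by move=> j _; rewrite !mxE (eq_sym k j); field.
rewrite !big_split /= !sumrN -!mulr_sumr !sum_blk !sum_delta.
have -> : bs (fun j : 'I_(L * n) => ((j %/ n)%N == (k %/ n)%N)%:R : R) (i %/ n)%N =
          ((i %/ n)%N == (k %/ n)%N)%:R * n%:R.
  rewrite -(@bs1 R L n _ (blk_lt i)) /bs mulr_sumr; apply: eq_bigr => j /eqP ->.
  by rewrite mulr1.
rewrite /c; move: c0; set x := (((i %/ n)%N == _)%:R); set y := ((i == k)%:R); set m := n%:R => c0; field; by rewrite c0 s0.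
Qed.

Lemma invSigma (R : realFieldType) (L n : nat) (s2 : R) : 0 < s2 ->
  invmx (Sigma L n s2) = Sinv L n s2.
Proof.
move=> hs; have h := SigmaSinv L n hs; have [u _] := mulmx1_unit h.
by rewrite -[invmx _]mulmx1 -h mulmxA mulVmx // mul1mx.
Qed.

Lemma rowform (R : realFieldType) (L n : nat) (s2 : R) (v : 'I_(L * n) -> R) i :
  \sum_j Sinv L n s2 i j * v j =
  s2^-1 * (v i - (n%:R + s2)^-1 * bs v (i %/ n)%N).
Proof.
rewrite (eq_bigr (fun j => s2^-1 * ((i == j)%:R * v j) -
   s2^-1 * (n%:R + s2)^-1 * (((i %/ n)%N == (j %/ n)%N)%:R * v j))); last first.
  by move=> j _; rewrite mxE; ring.
by rewrite sumrB -!mulr_sumr sum_delta sum_blk; ring.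
Qed.

Lemma qform (R : realFieldType) (L n : nat) (s2 : R) (k : nat)
  (X : 'M[R]_(L * n, 2)) (Z : 'M[R]_(L * n, k)) a b :
  (X^T *m Sinv L n s2 *m Z) a b =
  s2^-1 * (\sum_i X i a * Z i b - (n%:R + s2)^-1 *
     \sum_(l < L) bs (fun i => X i a) l * bs (fun i => Z i b) l).
Proof.
rewrite -mulmxA mxE.
under eq_bigr => i _ do rewrite !mxE rowform.
rewrite (eq_bigr (fun i => s2^-1 * (X i a * Z i b) - s2^-1 * (n%:R + s2)^-1 *
     (X i a * bs (fun j => Z j b) (i %/ n)%N))); last by move=> i _; ring.
rewrite sumrB -!mulr_sumr [X in _ - _ * X]bs_part.
rewrite mulrBr -mulrA; congr (_ - _ * (_ * _)).
apply: eq_bigr => l _; rewrite /bs mulr_suml; apply: eq_bigr => i /eqP ->.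
done.
Qed.

Lemma bsD (R : ringType) (L n : nat) (f g : 'I_(L * n) -> R) l :
  bs (fun i => f i + g i) l = bs f l + bs g l.
Proof. by rewrite /bs big_split. Qed.

Lemma bs_ext (R : ringType) (L n : nat) (f g : 'I_(L * n) -> R) l :
  f =1 g -> bs f l = bs g l.
Proof. by move=> h; apply: eq_bigr => i _. Qed.

Lemma bs_ind (R : ringType) (L n : nat) (A : 'I_(L * n) -> bool) a l :
  bs (fun i => (A i == a)%:R : R) l = (nla A l a)%:R.
Proof.
rewrite /bs /nla -sum1_card natr_sum big_mkcond [RHS]big_mkcond.
apply: eq_bigr => i _; rewrite in_set.
by case: (_ == l); case: (A i == a).
Qed.

Definition Tla (R : ringType) (L n : nat) (A : 'I_(L * n) -> bool) (Y : 'cV[R]_(L * n)) l a :=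
  \sum_(i : 'I_(L * n) | ((i %/ n)%N == l) && (A i == a)) Y i 0.

Lemma bs_indY (R : ringType) (L n : nat) (A : 'I_(L * n) -> bool) (Y : 'cV[R]_(L * n)) a l :
  bs (fun i => (A i == a)%:R * Y i 0) l = Tla A Y l a.
Proof.
rewrite /bs /Tla big_mkcondr; apply: eq_bigr => i _.
by case: (A i == a); rewrite ?mul1r ?mul0r.
Qed.

Lemma sum_ind (R : ringType) (N : nat) (A : 'I_N -> bool) a :
  \sum_i (A i == a)%:R = (na A a)%:R :> R.
Proof.
rewrite /na -sum1_card natr_sum [RHS]big_mkcond.
by apply: eq_bigr => i _; rewrite in_set; case: (A i == a).
Qed.

Definition Sa (R : ringType) (N : nat) (A : 'I_N -> bool) (Y : 'cV[R]_N) a :=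
  \sum_(i | A i == a) Y i 0.

Lemma sum_indY (R : ringType) (N : nat) (A : 'I_N -> bool) (Y : 'cV[R]_N) a :
  \sum_i (A i == a)%:R * Y i 0 = Sa A Y a.
Proof.
rewrite /Sa [RHS]big_mkcond; apply: eq_bigr => i _.
by case: (A i == a); rewrite ?mul1r ?mul0r.
Qed.

Lemma Ybar_la_T (R : realFieldType) (L n : nat) (A : 'I_(L * n) -> bool) (Y : 'cV[R]_(L * n)) l a :
  (nla A l a)%:R * Ybar_la A Y l a = Tla A Y l a.
Proof.
rewrite /Ybar_la; have [h0|hp] := eqVneq (nla A l a) 0%N.
  rewrite h0 mul0r /Tla big_pred0 // => i.
  by have := card0_eq h0 i; rewrite in_set.
by rewrite mulrC divfK // pnatr_eq0.
Qed.

Lemma Ybar_a_S (R : realFieldType) (N : nat) (A : 'I_N -> bool) (Y : 'cV[R]_N) a :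
  (0 < na A a)%N -> (na A a)%:R * Ybar_a A Y a = Sa A Y a.
Proof.
by move=> h; rewrite /Ybar_a mulrC divfK // pnatr_eq0 -lt0n.
Qed.

Definition i0 : 'I_2 := @Ordinal 2 0 isT.
Definition i1 : 'I_2 := @Ordinal 2 1 isT.

Lemma sum2 (F : fieldType) (f : 'I_2 -> F) : \sum_(k < 2) f k = f i0 + f i1.
Proof. by rewrite big_ord_recr big_ord1 /=; congr (f _ + f _); apply: val_inj. Qed.

Lemma ord2P (P : 'I_2 -> Prop) : P i0 -> P i1 -> forall i, P i.
Proof.
move=> H0 H1 [[|[|k]] Hk] //.
- by have -> : Ordinal Hk = i0 by apply: val_inj.
- by have -> : Ordinal Hk = i1 by apply: val_inj.
Qed.

Lemma inv22 (F : fieldType) (M : 'M[F]_2) (b : 'cV[F]_2) :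
  M i0 i0 * M i1 i1 - M i0 i1 * M i1 i0 != 0 ->
  (invmx M *m b) i1 0 = (M i0 i0 * b i1 0 - M i1 i0 * b i0 0) /
                          (M i0 i0 * M i1 i1 - M i0 i1 * M i1 i0).
Proof.
set d := _ - _ => hd.
pose W : 'M[F]_2 := \matrix_(i, j) ((if i == i0 then (if j == i0 then M i1 i1 else - M i0 i1)
    else (if j == i0 then - M i1 i0 else M i0 i0)) / d).
have MW : M *m W = 1%:M.
  apply/matrixP; apply: ord2P; apply: ord2P;
  rewrite !mxE sum2 !mxE /= /d; field; done.
have [uM _] := mulmx1_unit MW.
have -> : invmx M = W.
  by rewrite -[invmx M]mulmx1 -MW mulmxA mulVmx // mul1mx.
rewrite !mxE sum2 !mxE /=; field; done.
Qed.

Lemma des0 (R : realFieldType) (N : nat) (A : 'I_N -> bool) i : design R A i i0 = 1.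
Proof. by rewrite mxE. Qed.
Lemma des1 (R : realFieldType) (N : nat) (A : 'I_N -> bool) i :
  design R A i i1 = (A i == true)%:R.
Proof. by rewrite mxE /=; case: (A i). Qed.

Theorem mainTheorem5 (R : realFieldType) (L n : nat) (A : 'I_(L * n) -> bool)
  (hn1 : (0 < na A true)%N) (hn0 : (0 < na A false)%N) (hS : (0 < Sprod A)%N) :
  (forall (s2 : R) (Y : 'cV[R]_(L * n)), 0 < s2 ->
     tau_hat s2 A Y = lambda A s2 * tau1_hat A Y + (1 - lambda A s2) * tau0_hat A Y)
  /\ (forall e : R, 0 < e -> exists2 d : R, 0 < d &
        forall s2 : R, 0 < s2 -> s2 < d -> `|lambda A s2 - 1| < e)
  /\ (forall s s' : R, 0 < s -> s < s' -> lambda A s' < lambda A s).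
Proof.
set N := ((L * n)%N%:R : R).
set n1 := ((na A true)%:R : R).
set n0 := ((na A false)%:R : R).
set P := ((Sprod A)%:R : R).
have n1p : 0 < n1 by rewrite ltr0n.
have n0p : 0 < n0 by rewrite ltr0n.
have Pp : 0 < P by rewrite ltr0n.
have h1 : forall i, (1 : R) = (A i == true)%:R + (A i == false)%:R.
  by move=> i; case: (A i); rewrite ?addr0 ?add0r.
have hN : N = n1 + n0.
  rewrite /N -[X in X%:R]card_ord -sumr_const.
  under eq_bigr => i _ do rewrite (h1 i).
  by rewrite big_split /= !sum_ind.
have Np : 0 < N by rewrite hN addr_gt0.
pose nn := (n%:R : R).
pose m := fun l : nat => ((nla A l true)%:R : R).
pose k := fun l : nat => ((nla A l false)%:R : R).
have hn : forall l : 'I_L, nn = m l + k l.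
  move=> l; rewrite /nn -(@bs1 R L n l) //.
  by rewrite (bs_ext _ h1) bsD !bs_ind.
have en1 : n1 = \sum_(l < L) m l.
  by rewrite /n1 -sum_ind bs_part; apply: eq_bigr => l _; rewrite bs_ind.
have en0 : n0 = \sum_(l < L) k l.
  by rewrite /n0 -sum_ind bs_part; apply: eq_bigr => l _; rewrite bs_ind.
have hP : P = \sum_(l < L) k l * m l.
  by rewrite /P /Sprod natr_sum; apply: eq_bigr => l _; rewrite natrM.
have NPp : 0 < N * P by rewrite mulr_gt0.
have aP : 0 < n1 * n0 by rewrite mulr_gt0.
split; last split.
- move=> s2 Y hs.
  have s0 : s2 != 0 by rewrite gt_eqF.
  have cp : 0 < nn + s2 by rewrite ltr_wpDl.
  set c := (nn + s2)^-1.
  pose T1 := fun l : nat => Tla A Y l true.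
  pose T0 := fun l : nat => Tla A Y l false.
  set S1 := Sa A Y true.
  set S0 := Sa A Y false.
  pose Q := \sum_(l < L) (k l * T1 l - m l * T0 l).
  set X := design R A.
  have hY : forall i, Y i 0 = (A i == true)%:R * Y i 0 + (A i == false)%:R * Y i 0.
    by move=> i; case: (A i); rewrite ?mul1r ?mul0r ?addr0 ?add0r.
  have bsX0 : forall l : 'I_L, bs (fun i => X i i0) l = nn.
    by move=> l; rewrite (bs_ext _ (@des0 R _ A)) bs1.
  have bsX1 : forall l, bs (fun i => X i i1) l = m l.
    by move=> l; rewrite (bs_ext _ (@des1 R _ A)) bs_ind.
  have bsY : forall l, bs (fun i => Y i 0) l = T1 l + T0 l.
    by move=> l; rewrite (bs_ext _ hY) bsD !bs_indY.
  have sumnn : \sum_(l < L) nn = N.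
    by rewrite sumr_const card_ord /nn /N -mulrnA mulnC.
  have eS1 : S1 = \sum_(l < L) T1 l.
    by rewrite /S1 -sum_indY bs_part; apply: eq_bigr => l _; rewrite bs_indY.
  have eS0 : S0 = \sum_(l < L) T0 l.
    by rewrite /S0 -sum_indY bs_part; apply: eq_bigr => l _; rewrite bs_indY.
  have M00 : (X^T *m Sinv L n s2 *m X) i0 i0 = s2^-1 * (N - c * (nn * N)).
    rewrite qform -/c; congr (_ * (_ - _ * _)).
      by rewrite /N -[X in X%:R]card_ord -sumr_const; apply: eq_bigr => i _; rewrite des0 mulr1.
    by rewrite -sumnn mulr_sumr; apply: eq_bigr => l _; rewrite bsX0.
  have M10 : (X^T *m Sinv L n s2 *m X) i1 i0 = s2^-1 * (n1 - c * (nn * n1)).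
    rewrite qform -/c; congr (_ * (_ - _ * _)).
      by rewrite /n1 -sum_ind; apply: eq_bigr => i _; rewrite des0 des1 mulr1.
    by rewrite en1 mulr_sumr; apply: eq_bigr => l _; rewrite bsX0 bsX1 mulrC.
  have M01 : (X^T *m Sinv L n s2 *m X) i0 i1 = s2^-1 * (n1 - c * (nn * n1)).
    rewrite qform -/c; congr (_ * (_ - _ * _)).
      by rewrite /n1 -sum_ind; apply: eq_bigr => i _; rewrite des0 des1 mul1r.
    by rewrite en1 mulr_sumr; apply: eq_bigr => l _; rewrite bsX0 bsX1.
  have M11 : (X^T *m Sinv L n s2 *m X) i1 i1 = s2^-1 * (n1 - c * (nn * n1 - P)).
    rewrite qform -/c; congr (_ * (_ - _ * _)).
      rewrite /n1 -sum_ind; apply: eq_bigr => i _; rewrite des1.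
      by case: (A i); rewrite ?mulr1 ?mulr0.
    rewrite en1 hP mulr_sumr -sumrB; apply: eq_bigr => l _; rewrite bsX1 (hn l); ring.
  have B0 : (X^T *m Sinv L n s2 *m Y) i0 0 = s2^-1 * ((S1 + S0) - c * (nn * (S1 + S0))).
    rewrite qform -/c; congr (_ * (_ - _ * _)).
      rewrite /S1 /S0 -!sum_indY -big_split /=; apply: eq_bigr => i _.
      by rewrite des0 mul1r -hY.
    rewrite eS1 eS0 -big_split mulr_sumr; apply: eq_bigr => l _; rewrite bsX0 bsY.
    done.
  have B1 : (X^T *m Sinv L n s2 *m Y) i1 0 = s2^-1 * (S1 - c * (nn * S1 - Q)).
    rewrite qform -/c; congr (_ * (_ - _ * _)).
      by rewrite /S1 -sum_indY; apply: eq_bigr => i _; rewrite des1.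
    rewrite eS1 mulr_sumr /Q -sumrB; apply: eq_bigr => l _; rewrite bsX1 bsY (hn l); ring.
  have yb1 : Ybar_a A Y true = S1 / n1.
    by rewrite /S1 -(Ybar_a_S Y hn1) -/n1 mulrAC divff ?mul1r // gt_eqF.
  have yb0 : Ybar_a A Y false = S0 / n0.
    by rewrite /S0 -(Ybar_a_S Y hn0) -/n0 mulrAC divff ?mul1r // gt_eqF.
  have tq : \sum_(l < L) ((nla A l false * nla A l true)%:R *
      (Ybar_la A Y l true - Ybar_la A Y l false)) = Q.
    apply: eq_bigr => l _; rewrite natrM.
    have -> : forall a b y1 y0 : R, a * b * (y1 - y0) = a * (b * y1) - b * (a * y0).
      by move=> *; ring.
    by rewrite !Ybar_la_T.
  rewrite /tau_hat /gls invSigma // -/X -[@Ordinal 2 1 isT]/i1.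
  have Dp : 0 < n1 * n0 * s2 + N * P by rewrite ltr_wpDl // ltW // mulr_gt0.
  have hd : (X^T *m Sinv L n s2 *m X) i0 i0 * (X^T *m Sinv L n s2 *m X) i1 i1 -
            (X^T *m Sinv L n s2 *m X) i0 i1 * (X^T *m Sinv L n s2 *m X) i1 i0 =
            (n1 * n0 * s2 + N * P) / (s2 * (nn + s2) ^+ 2).
    rewrite M00 M11 M01 M10 /c; move: Dp; rewrite hN => Dp.
    move: cp s0 Dp; clearbody N n1 n0 P nn => cp s0 Dp.
    by field; rewrite gt_eqF.
  rewrite inv22; last first.
    by rewrite hd gt_eqF // divr_gt0 // mulr_gt0 // exprn_gt0.
  rewrite hd M00 M10 B0 B1 /lambda -/N -/n1 -/n0 -/P /tau1_hat tq -/P /tau0_hat yb1 yb0.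
  rewrite /c; move: Dp; rewrite hN => Dp.
  move: cp s0 Dp n1p n0p Pp; clearbody N n1 n0 P nn Q S1 S0 => cp s0 Dp n1p n0p Pp.
  field.
  by rewrite s0 !gt_eqF.
- move=> e he; exists (e * (N * P) / (n1 * n0)).
    by rewrite divr_gt0 // mulr_gt0.
  move=> s hs hsd; rewrite /lambda -/N -/n1 -/n0 -/P.
  have Dp : 0 < n1 * n0 * s + N * P by rewrite ltr_wpDl // ltW // mulr_gt0.
  have -> : N * P / (n1 * n0 * s + N * P) - 1 = - (n1 * n0 * s / (n1 * n0 * s + N * P)).
    by field; rewrite gt_eqF // -[L%:R * _]natrM.
  rewrite normrN ger0_norm; last by rewrite divr_ge0 // ltW // mulr_gt0.
  rewrite ltr_pdivrMr //.
  move: hsd; rewrite ltr_pdivlMr // => hsd.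
  nra.
- move=> s s' hs hss'; rewrite /lambda -/N -/n1 -/n0 -/P.
  have Dp : 0 < n1 * n0 * s + N * P by rewrite ltr_wpDl // ltW // mulr_gt0.
  have Dp' : 0 < n1 * n0 * s' + N * P by rewrite ltr_wpDl // ltW // mulr_gt0 // (lt_trans hs).
  rewrite ltr_pdivrMr // mulrAC ltr_pdivlMr //.
  by rewrite ltr_pM2l // ltrD2r ltr_pM2l.
Qed.
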